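(* Let $T$ be a recurrent operator on a separable Fréchet space $X$. Then every sequence $\omega\in\mathfrak{C}$ admits a subsequence which is stationary.
   Context: For a continuous linear operator $T$ on a Fréchet space $X$: $x$ is recurrent if $T^{\omega_n}x\to x$ for some strictly increasing sequence $(\omega_n)$ of positive integers; $T$ is recurrent if the set of recurrent vectors is dense. $\mathfrak{C}$ is the set of strictly increasing sequences $\omega=(\omega_n)$ of positive integers such that $T^{\omega_n}x\to x$ for some $x\neq 0$; for $\omega\in\mathfrak{C}$, $\mathfrak{L}(\omega)=\{x\in X:T^{\omega_n}x\to x\}$. A sequence $\omega\in\mathfrak{C}$ is stationary if $\overline{\mathfrak{L}(\omega)}=\overline{\mathfrak{L}(\mu)}$ for every subsequence $\mu$ of $\omega$. *)

(* Defs.v *)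
From HB Require Import structures.
From mathcomp Require Import all_boot all_order all_algebra.
From mathcomp Require Import all_classical all_reals all_analysis.
Set Implicit Arguments. Unset Strict Implicit. Unset Printing Implicit Defensive.
Import Order.TTheory GRing.Theory Num.Theory.
Local Open Scope classical_set_scope.
Local Open Scope ring_scope.

Section Defs.
Context {K : numFieldType} {X : tvsType K}.

(* Fréchet space: a (locally convex, by tvsType) topological vector space
   that is Hausdorff, metrizable (countable basis of the uniformity) and
   complete (every Cauchy proper filter converges). *)
Definition frechet_space : Prop :=
  [/\ hausdorff_space X,
      countable_uniformity X &
      forall F : set_system X, ProperFilter F -> cauchy F ->
        exists x : X, F --> x].

Definition separable_space : Prop :=
  exists D : set X, countable D /\ dense D.

Definition pos_strict_incr (w : nat -> nat) : Prop :=
  (0 < w 0)%N /\ forall n, (w n < w n.+1)%N.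

Definition strict_incr (phi : nat -> nat) : Prop :=
  forall n, (phi n < phi n.+1)%N.

Variable T : X -> X.

Definition Lset (w : nat -> nat) : set X :=
  [set x | (fun n => iter (w n) T x) @ \oo --> x].

Definition recurrent_vector (x : X) : Prop :=
  exists w, pos_strict_incr w /\ Lset w x.

Definition recurrent_operator : Prop :=
  dense [set x | recurrent_vector x].

Definition frakC (w : nat -> nat) : Prop :=
  pos_strict_incr w /\ exists x : X, x <> 0 /\ Lset w x.

Definition stationary (w : nat -> nat) : Prop :=
  frakC w /\
  forall phi, strict_incr phi -> closure (Lset (w \o phi)) = closure (Lset w).

End Defs.

(* Main.v *)
Require Import Defs.
From HB Require Import structures.
From mathcomp Require Import all_boot all_order all_algebra.
From mathcomp Require Import all_classical all_reals all_analysis.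
From mathcomp Require Import zify.
Set Implicit Arguments. Unset Strict Implicit.
Local Open Scope classical_set_scope.
Local Open Scope ring_scope.

Lemma si_le (h : nat -> nat) : strict_incr h -> forall n, (n <= h n)%N.
Proof. move=> hi; elim=> [|m IH] //; exact: leq_ltn_trans IH (hi m). Qed.

Lemma si_lt (h : nat -> nat) : strict_incr h -> forall m n, (m < n)%N -> (h m < h n)%N.
Proof. move=> hi m n; exact: (homo_ltn (fun y x z => @ltn_trans y x z) hi). Qed.

Lemma si_comp (h g : nat -> nat) : strict_incr h -> strict_incr g -> strict_incr (h \o g).
Proof. by move=> hh hg n /=; apply: si_lt. Qed.

Lemma si_id : strict_incr id. Proof. by []. Qed.

Lemma incr_cvg (h : nat -> nat) : strict_incr h -> h @ \oo --> \oo.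
Proof.
move=> hi A [N _ HA]. exists N => // n /= Hn. apply: HA => /=.
exact: (leq_trans Hn (si_le hi n)).
Qed.

Section L.
Context {K : numFieldType} {X : tvsType K} (T : X -> X).

Lemma Lset_sub (v h : nat -> nat) (x : X) : strict_incr h -> Lset T v x -> Lset T (v \o h) x.
Proof.
move=> hi; rewrite /Lset /= => fx.
have := @cvg_comp _ _ _ h (fun n => iter (v n) T x) _ _ _ (incr_cvg hi) fx.
by [].
Qed.

Lemma Lset_shift (v : nat -> nat) (k : nat) (x : X) :
  Lset T (fun n => v (n + k)%N) x -> Lset T v x.
Proof.
rewrite /Lset /= => H.
move=> A /H [N _ HN]; exists (N + k)%N => // n /= Hn.
have Hk : (k <= n)%N by apply: leq_trans Hn; exact: leq_addl.
rewrite -(subnK Hk); apply: HN => /=.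
by rewrite leq_subRL // addnC.
Qed.
End L.

Lemma si_leq (h : nat -> nat) : strict_incr h -> forall m n, (m <= n)%N -> (h m <= h n)%N.
Proof.
move=> hi m n; rewrite leq_eqVlt => /orP [/eqP -> //|lt].
exact: ltnW (si_lt hi lt).
Qed.

Fixpoint chain (sel : nat * (nat -> nat) -> nat -> nat) (k : nat) : nat -> nat :=
  match k with 0 => id | k'.+1 => chain sel k' \o sel (k', chain sel k') end.

Fixpoint Gf (sel : nat * (nat -> nat) -> nat -> nat) (k n : nat) : nat -> nat :=
  match n with 0 => id | n'.+1 => Gf sel k n' \o sel ((n' + k)%N, chain sel (n' + k)) end.

Section Ch.
Variable sel : nat * (nat -> nat) -> nat -> nat.
Hypothesis hsel : forall p, strict_incr (sel p).

Lemma chainG k n m : chain sel (n + k) m = chain sel k (Gf sel k n m).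
Proof.
elim: n m => [|n IH] m; first by rewrite add0n.
by rewrite addSn /= IH.
Qed.

Lemma chain_si k : strict_incr (chain sel k).
Proof. elim: k => [|k IH] //=; exact: si_comp. Qed.

Lemma Gf_si k n : strict_incr (Gf sel k n).
Proof. elim: n => [|n IH] //=; exact: si_comp. Qed.

Definition phi n := chain sel n n.

Lemma phi_si : strict_incr phi.
Proof.
move=> n; rewrite /phi /=.
apply: si_lt; first exact: chain_si.
exact: leq_trans (si_le (hsel _) n.+1).
Qed.

Lemma phi_tail k : exists g, strict_incr g /\ forall n, phi (n + k) = chain sel k (g n).
Proof.
exists (fun n => Gf sel k n (n + k)); split; last by move=> n; rewrite /phi chainG.
move=> n /=; apply: si_lt; first exact: Gf_si.
rewrite addSn; exact: leq_trans (si_le (hsel _) (n + k).+1).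
Qed.
End Ch.

Lemma Lset_ext {K : numFieldType} {X : tvsType K} (T : X -> X) (f g : nat -> nat) x :
  (forall n, f n = g n) -> Lset T f x -> Lset T g x.
Proof. by move=> fg; have -> : f = g by apply: funext. Qed.

Lemma main_diag (K : numFieldType) (X : tvsType K) (T : X -> X) (S : nat -> set X)
  (HS : forall (y : X) (N : set X), nbhs y N -> exists k, S k `<=` N /\ nbhs y (S k))
  (w : nat -> nat) : frakC T w ->
  exists phi : nat -> nat, strict_incr phi /\ stationary T (w \o phi).
Proof.
move=> [[w0 wi] [x0 [x0n Lx0]]].
have sel_ex : forall p : nat * (nat -> nat), exists a, strict_incr a /\
  ((exists b, strict_incr b /\ exists x, Lset T (w \o p.2 \o b) x /\ S p.1 x) ->
    exists x, Lset T (w \o p.2 \o a) x /\ S p.1 x).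
  move=> [k psi] /=.
  case: (pselect (exists b, strict_incr b /\ exists x, Lset T (w \o psi \o b) x /\ S k x)).
    by move=> [b [hb Hx]]; exists b; split => // _.
  by move=> nP; exists id; split => // /nP.
case: (choice sel_ex) => sel Hsel.
have hsel : forall p, strict_incr (sel p) by move=> p; case: (Hsel p).
have wsi : strict_incr (w \o phi sel) by apply: si_comp => //; exact: phi_si.
have LC : Lset T (w \o phi sel) x0 by apply: Lset_sub => //; exact: phi_si.
exists (phi sel); split; first exact: phi_si.
split.
  split; last by exists x0.
  split => //=; exact: leq_trans w0 (si_leq wi (leq0n _)).
move=> chi hchi; apply/seteqP; split; last first.
  by apply: closure_subset => x; apply: Lset_sub.
move=> y Hy N HN.
have [k [SkN nbSk]] := HS y N HN.
have [x [Lx Skx]] := Hy (S k) nbSk.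
have [g [hg Hg]] := phi_tail hsel k.
have Hb : exists b, strict_incr b /\ exists x, Lset T (w \o chain sel k \o b) x /\ S k x.
  exists (fun n => g (chi (n + k) - k)%N); split.
    move=> n; apply: si_lt => //.
    have h1 := si_le hchi (n + k); have h2 := hchi (n + k)%N.
    rewrite addSn; lia.
  exists x; split => //.
  apply: (@Lset_ext _ _ _ (fun n => ((w \o phi sel) \o chi) (n + k)%N)).
    move=> n /=; rewrite -Hg subnK //.
    exact: leq_trans (leq_addl n k) (si_le hchi _).
  apply: (@Lset_sub _ _ _ _ (fun n => n + k)%N) => // n; lia.
have [x' [Lx' Skx']] := (Hsel (k, chain sel k)).2 Hb.
have [g' [hg' Hg']] := phi_tail hsel k.+1.
exists x'; split; last exact: SkN.
apply: (@Lset_shift _ _ _ _ k.+1).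
apply: (@Lset_ext _ _ _ (w \o chain sel k.+1 \o g')).
  by move=> n /=; rewrite Hg'.
exact: Lset_sub.
Qed.

Lemma baseS (K : numFieldType) (X : tvsType K) :
  @frechet_space K X -> @separable_space K X ->
  exists S : nat -> set X, forall (y : X) (N : set X), nbhs y N ->
    exists k, S k `<=` N /\ nbhs y (S k).
Proof.
case=> _ cu _ [D [cD dD]].
have [g gE ge] := iffLR countable_uniformityP cu.
case/countable_injP: cD => f finj.
pose S n := match (unpickle n : option (nat * nat)) with
  | Some (i, j) => [set z | exists d, D d /\ f d = i /\ g j (d, z)]
  | None => set0 end.
exists S => y N /nbhsP [E entE EsubN].
have [j gj] := gE _ (entourage_split_ent entE).
pose B := split_ent (g j).
have entB : entourage B by exact: (entourage_split_ent (ge j)).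
pose W := xsection (split_ent E) y `&` xsection (B^-1)%relation y.
have nW : nbhs y W.
  apply: filterI; [exact: (nbhs_entourage y (entourage_split_ent entE))
                  | exact: (nbhs_entourage y (entourage_inv entB))].
have [d [Wd Dd]] : (W° `&` D) !=set0.
  apply: dD; last exact: open_interior.
  by exists y; apply: nbhs_singleton; apply: nbhs_interior.
have [Ed Bd] := interior_subset Wd.
exists (pickle (f d, j)); rewrite /S pickleK; split.
  move=> z [d' [Dd' [fd gz]]].
  have dd : d' = d by apply: finj; rewrite ?inE.
  subst d'.
  apply: EsubN; rewrite /xsection /= in Ed *; apply/mem_set.
  apply: (subset_split_ent entE); exists d; [exact: set_mem Ed | exact: gj].
apply: filterS (nbhs_entourage y entB) => z Bz.
exists d; split => //; split => //.
rewrite /xsection /= in Bd Bz.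
apply: (subset_split_ent (ge j)); exists y; [exact: set_mem Bd | exact: set_mem Bz].
Qed.

Unset Implicit Arguments.
Theorem theorem4p2 (K : numFieldType) (X : tvsType K) (T : {linear X -> X}) :
  @frechet_space K X -> @separable_space K X -> continuous T ->
  recurrent_operator T ->
  forall w : nat -> nat, frakC T w ->
    exists phi : nat -> nat, strict_incr phi /\ stationary T (w \o phi).
Proof.
move=> fr sep _ _ w fw.
have [S HS] := baseS fr sep.
exact: (@main_diag K X T S HS w fw).
Qed.
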